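(* Let $m\geq 3$ and let $i,k$ be nonnegative integers with $i+k\leq m$. Write $P_{i,k}:=E^*_{i+k}A_1E^*_{i+k-1}A_1E^*_{i+k-2}\cdots E^*_{i+1}A_1E^*_{i}$. Then: (i) if $i$ is even and $k$ is odd, $P_{i,k}=\big((\tfrac{k-1}{2})!\big)^2\,\tfrac{k+1}{2}\,M^{\frac{k-1}{2},\frac{k-1}{2}}_{\frac{i+k-1}{2},\frac{2m-i}{2}}$; (ii) if $i$ is even and $k\geq2$ is even, $P_{i,k}=\big((\tfrac{k}{2})!\big)^2\,M^{\frac{2m-k}{2},\frac{2m-i-k}{2}}_{\frac{2m-i-k}{2},\frac{2m-i}{2}}$; (iii) if $i$ is odd and $k$ is odd, $P_{i,k}=\big((\tfrac{k-1}{2})!\big)^2\,\tfrac{k+1}{2}\,M^{\frac{k-1}{2},0}_{\frac{2m-i-k}{2},\frac{i-1}{2}}$; (iv) if $i$ is odd and $k\geq 2$ is even, $P_{i,k}=\big((\tfrac{k}{2})!\big)^2\,M^{\frac{2m-k}{2},\frac{i-1}{2}}_{\frac{i+k-1}{2},\frac{i-1}{2}}$.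
   Context: Let $m\geq3$, $S=\{1,\ldots,2m+1\}$, $X$ the set of $m$-subsets of $S$, and $O_{m+1}$ the Odd graph on $X$ (adjacency = disjointness). Its distance is $\partial(x,y)=2|x\cap y|+1$ if $|x\cap y|\leq\lfloor\frac{m-1}{2}\rfloor$ and $2m-2|x\cap y|$ otherwise. Let $x_0=\{1,\ldots,m\}$, $A_1$ the adjacency matrix, and $E^*_i$ ($0\leq i\leq m$) the diagonal $X\times X$ matrix with $(y,y)$-entry $1$ iff $\partial(x_0,y)=i$. For integers $i,j,t,p$, $M^{t,p}_{i,j}$ denotes the $X\times X$ $0/1$-matrix whose $(x,y)$-entry is $1$ iff $|x_0\cap x|=i$, $|x_0\cap y|=j$, $|x\cap y|=t$ and $|x_0\cap x\cap y|=p$. *)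

(* Defs.v *)
From mathcomp Require Import all_boot.
Unset Printing Implicit Defensive.

(* Ground set S = {1,...,2m+1}, modelled 0-indexed as 'I_(2m+1). *)
Definition ground (m : nat) := 'I_(2 * m + 1).

(* X = the m-subsets of S (vertex set of the Odd graph O_{m+1}). *)
Definition X (m : nat) := {x : {set ground m} | #|x| == m}.

(* x0 = {1,...,m}, i.e. the 0-indexed elements 0..m-1. *)
Definition x0 (m : nat) : {set ground m} := [set s : ground m | val s < m].

Definition mx (m : nat) := X m -> X m -> nat.

Definition mxmul (m : nat) (A B : mx m) : mx m :=
  fun x y => \sum_(z : X m) A x z * B z y.

(* Distance in O_{m+1}, by the formula given in the paper. *)
Definition odd_dist (m : nat) (x y : {set ground m}) : nat :=
  let t := #|x :&: y| in
  if t <= (m - 1) %/ 2 then 2 * t + 1 else 2 * m - 2 * t.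

(* Adjacency matrix A_1: adjacency = disjointness. *)
Definition A1 (m : nat) : mx m :=
  fun x y => nat_of_bool [disjoint val x & val y].

Definition Estar (m i : nat) : mx m :=
  fun x y => nat_of_bool ((x == y) && (odd_dist m (x0 m) (val y) == i)).

Definition Mtp (m i j t p : nat) : mx m :=
  fun x y => nat_of_bool
    [&& #|x0 m :&: val x| == i, #|x0 m :&: val y| == j,
        #|val x :&: val y| == t & #|x0 m :&: val x :&: val y| == p].

Fixpoint Pchain (m i k : nat) : mx m :=
  match k with
  | 0 => Estar m i
  | k'.+1 => mxmul m (mxmul m (Estar m (i + k'.+1)) (A1 m)) (Pchain m i k')
  end.

(* Main.v *)
Require Import Defs.
From mathcomp Require Import all_boot.
From mathcomp Require Import zify.


Definition atom {T : finType} (A B C : {set T}) a b c :=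
  #|[set w | [&& (w \in A) == a, (w \in B) == b & (w \in C) == c]]|.

Lemma card_sumb (T : finType) (S : {set T}) :
  \sum_(w : T) nat_of_bool (w \in S) = #|S|.
Proof. rewrite -sum1_card [RHS]big_mkcond; apply: eq_bigr => w _; by case: (w \in S). Qed.

Lemma atoms (T : finType) (A B C : {set T}) (f : bool -> bool -> bool -> nat) :
  \sum_(w : T) f (w \in A) (w \in B) (w \in C) =
  f true true true * atom A B C true true true +
  f true true false * atom A B C true true false +
  f true false true * atom A B C true false true +
  f true false false * atom A B C true false false +
  f false true true * atom A B C false true true +
  f false true false * atom A B C false true false +
  f false false true * atom A B C false false true +
  f false false false * atom A B C false false false.
Proof.
rewrite /atom -!card_sumb !big_distrr -!big_split /=.
apply: eq_bigr => w _; rewrite !inE.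
by case: (w \in A); case: (w \in B); case: (w \in C);
  rewrite /= ?muln0 ?muln1 ?addn0 ?add0n.
Qed.

Lemma card_x0 m : #|x0 m| = m.
Proof.
have hm : m <= 2 * m + 1 by lia.
have -> : x0 m = [set widen_ord hm s | s in 'I_m].
  apply/setP => s; rewrite inE; apply/idP/imsetP => [hs|[t _ ->]] //=.
  by exists (Ordinal hs) => //; apply: val_inj.
rewrite (@card_imset _ _ (widen_ord hm) 'I_m) ?card_ord // => a b /(congr1 val) /= e; exact: val_inj.
Qed.

Definition lev m d := if odd d then d %/ 2 else m - d %/ 2.

Lemma dist_lev m d (S : {set ground m}) : 0 < m -> d <= m -> #|x0 m :&: S| <= m ->
  (odd_dist m (x0 m) S == d) = (#|x0 m :&: S| == lev m d).
Proof.
move=> hm hd ht; rewrite /odd_dist /lev /=.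
move: ht; set t := #|x0 m :&: S| => ht.
have := modn2 d; have := divn_eq d 2.
case: (odd d) => /= h1 h2; case: leqP => h3; apply/eqP/eqP. all: try lia.
all: have := divn_eq m.-1 2; have := ltn_pmod m.-1 (isT : 0 < 2); lia.
Qed.

Lemma cardD1' (T : finType) (A : {set T}) w : #|A :\ w| = #|A| - (w \in A).
Proof. rewrite (cardsD1 w A); lia. Qed.


Lemma cardXm m (x : X m) : #|val x| = m.
Proof. exact: (eqP (valP x)). Qed.

Lemma cardC_X m (x : X m) : #|~: val x| = m.+1.
Proof. have := cardsC (val x); rewrite card_ord cardXm; lia. Qed.

Lemma sum_adj m (x : X m) (F : {set ground m} -> nat) :
  \sum_(z : X m) A1 m x z * F (val z) = \sum_(w in ~: val x) F (~: val x :\ w).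
Proof.
transitivity (\sum_(z in [set z : X m | [disjoint val x & val z]]) F (val z)).
  rewrite [RHS]big_mkcond; apply: eq_bigr => z _; rewrite /A1 inE.
  by case: [disjoint _ & _]; rewrite ?mul1n ?mul0n.
have injh : {in ~: val x &, injective (fun w => ~: val x :\ w)}.
  move=> w1 w2 h1 h2 e; move/setP: (e) => /(_ w1); rewrite !inE eqxx /=.
  rewrite inE in h1; rewrite h1 andbT => /esym/negbFE/eqP //.
rewrite -(big_imset _ (in2W val_inj)) -(big_imset _ injh).
apply: eq_bigl => S; apply/imsetP/imsetP.
  case=> z; rewrite inE => dz ->.
  have sub : val z \subset ~: val x by rewrite -disjoints_subset disjoint_sym.
  have : #|~: val x :\: val z| == 1.
    by rewrite cardsD cardC_X (setIidPr sub) cardXm subSnn.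
  case/cards1P => w hw.
  have wx : w \in ~: val x by move/setP: (hw) => /(_ w); rewrite !inE eqxx; case/andP.
  exists w => //; apply/setP => u.
  move/setP: (hw) => /(_ u); move/subsetP: sub => /(_ u).
  rewrite !inE; case: (u \in val z); case: (u \in val x); case: (u == w) => //= h1 h2;
    try by have := h1 isT.

case=> w hw ->.
have cs : #|~: val x :\ w| == m by rewrite cardD1' cardC_X hw /= subn1.
exists (exist (fun S : {set ground m} => #|S| == m) _ cs) => //; rewrite inE /= disjoints_subset.
by apply/subsetP => u ux; rewrite !inE ux andbF.
Qed.

Lemma Pchain_S m i k (x y : X m) : Pchain m i k.+1 x y =
  nat_of_bool (odd_dist m (x0 m) (val x) == i + k.+1) *
  \sum_(z : X m) A1 m x z * Pchain m i k z y.
Proof.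
rewrite /= /mxmul big_distrr; apply: eq_bigr => z _ /=; rewrite mulnA; congr (_ * _).
rewrite (bigD1 x) //= big1 ?addn0; first by rewrite /Estar eqxx.
by move=> w hw; rewrite /Estar eq_sym (negbTE hw).
Qed.

Definition MS m a b c d (S Y : {set ground m}) : nat :=
  nat_of_bool [&& #|x0 m :&: S| == a, #|x0 m :&: Y| == b,
        #|S :&: Y| == c & #|x0 m :&: S :&: Y| == d].

Lemma MS_shift m a b c d (Z Y : {set ground m}) w : w \in ~: Z ->
  MS m a b c d (~: Z :\ w) Y = nat_of_bool
    [&& #|x0 m :&: ~: Z| - (w \in x0 m) == a, #|x0 m :&: Y| == b,
        #|~: Z :&: Y| - (w \in Y) == c &
        #|x0 m :&: ~: Z :&: Y| - ((w \in x0 m) && (w \in Y)) == d].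
Proof.
move=> hw; rewrite /MS.
have e1 : x0 m :&: (~: Z :\ w) = (x0 m :&: ~: Z) :\ w.
  by apply/setP => u; rewrite !(in_setI, in_setD1, in_setC); case: (u == w); case: (u \in x0 m); case: (u \in Z); case: (u \in Y).
have e2 : (~: Z :\ w) :&: Y = (~: Z :&: Y) :\ w.
  by apply/setP => u; rewrite !(in_setI, in_setD1, in_setC); case: (u == w); case: (u \in x0 m); case: (u \in Z); case: (u \in Y).
have e3 : x0 m :&: (~: Z :\ w) :&: Y = (x0 m :&: ~: Z :&: Y) :\ w.
  by apply/setP => u; rewrite !(in_setI, in_setD1, in_setC); case: (u == w); case: (u \in x0 m); case: (u \in Z); case: (u \in Y).
rewrite e3 e1 e2 !cardD1' !(in_setI, in_setC); rewrite in_setC in hw; rewrite hw ?andbT //.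
Qed.


Definition pa1 m i k := if odd i then (if odd k then m - i%/2 - k%/2 - 1 else i%/2 + k%/2)
                        else (if odd k then i%/2 + k%/2 else m - i%/2 - k%/2).
Definition pa2 m i := if odd i then i%/2 else m - i%/2.
Definition pa3 m k := if odd k then k%/2 else m - k%/2.
Definition pa4 m i k := if odd i then (if odd k then 0 else i%/2)
                        else (if odd k then k%/2 else m - i%/2 - k%/2).

Ltac crush :=
  repeat (match goal with
    | |- context [?a == ?b :> nat] =>
        first [ rewrite (_ : (a == b) = true); last by apply/eqP; lia
              | rewrite (_ : (a == b) = false); last by apply/eqP; lia ]
  end); rewrite /=;
  first [ match goal with |- context [?a == ?b :> nat] => case: (a =P b) => ?; crush end | lia ].

Lemma arith m i k c111 c110 c101 c100 c011 c010 c001 c000 : 0 < m -> i + k.+1 <= m ->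
  m = c111+c110+c101+c100 -> m = c111+c110+c011+c010 -> m = c111+c101+c011+c001 ->
  2*m+1 = c111+c110+c101+c100+c011+c010+c001+c000 ->
  (c111 + c110 == lev m (i + k.+1)) *
  ([&& (c101+c100) - 1 == pa1 m i k, c111+c101 == pa2 m i, (c101+c001) - 1 == pa3 m k & c101 - 1 == pa4 m i k] * c101
   + [&& (c101+c100) - 1 == pa1 m i k, c111+c101 == pa2 m i, (c101+c001) - 0 == pa3 m k & c101 - 0 == pa4 m i k] * c100
   + 0 + 0
   + [&& (c101+c100) - 0 == pa1 m i k, c111+c101 == pa2 m i, (c101+c001) - 1 == pa3 m k & c101 - 0 == pa4 m i k] * c001
   + [&& (c101+c100) - 0 == pa1 m i k, c111+c101 == pa2 m i, (c101+c001) - 0 == pa3 m k & c101 - 0 == pa4 m i k] * c000)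
  = (k %/ 2 + 1) * [&& c111+c110 == pa1 m i k.+1, c111+c101 == pa2 m i, c111+c011 == pa3 m k.+1 & c111 == pa4 m i k.+1].
Proof.
move=> m0 hik e8 e9 e10 e11.
rewrite /pa1 /pa2 /pa3 /pa4 /lev /= oddD /=.
have := modn2 i; have := divn_eq i 2; have := modn2 k; have := divn_eq k 2.
case: (odd i); case: (odd k) => /= h1 h2 h3 h4.
- have -> : (i + k.+1) %/ 2 = i %/ 2 + k %/ 2 + 1 by lia.
  have -> : k.+1 %/ 2 = k %/ 2 + 1 by lia.
  have hik' : 2 * (i %/ 2) + 2 * (k %/ 2) + 3 <= m by lia.
  move: hik'; move: (i %/ 2) (k %/ 2) => i' j hik'; clear h1 h2 h3 h4 hik.
  crush.
- have -> : (i + k.+1) %/ 2 = i %/ 2 + k %/ 2 + 1 by lia.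
  have -> : k.+1 %/ 2 = k %/ 2 by lia.
  have hik' : 2 * (i %/ 2) + 2 * (k %/ 2) + 2 <= m by lia.
  move: hik'; move: (i %/ 2) (k %/ 2) => i' j hik'; clear h1 h2 h3 h4 hik.
  crush.
- have -> : (i + k.+1) %/ 2 = i %/ 2 + k %/ 2 + 1 by lia.
  have -> : k.+1 %/ 2 = k %/ 2 + 1 by lia.
  have hik' : 2 * (i %/ 2) + 2 * (k %/ 2) + 2 <= m by lia.
  move: hik'; move: (i %/ 2) (k %/ 2) => i' j hik'; clear h1 h2 h3 h4 hik.
  crush.
- have -> : (i + k.+1) %/ 2 = i %/ 2 + k %/ 2 by lia.
  have -> : k.+1 %/ 2 = k %/ 2 by lia.
  have hik' : 2 * (i %/ 2) + 2 * (k %/ 2) + 1 <= m by lia.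
  move: hik'; move: (i %/ 2) (k %/ 2) => i' j hik'; clear h1 h2 h3 h4 hik.
  crush.
Qed.


Definition coefk k := (k %/ 2)`! ^ 2 * (if odd k then k %/ 2 + 1 else 1).
Definition invp m i k := MS m (pa1 m i k) (pa2 m i) (pa3 m k) (pa4 m i k).

Ltac cardeq m x y f := rewrite -card_sumb; under eq_bigr => w _ do rewrite ?in_setI ?in_setC ?in_setT;
  rewrite (atoms _ (x0 m) (val x) (val y) f) /=; lia.

Lemma coefkS k : coefk k.+1 = coefk k * (k %/ 2 + 1).
Proof.
rewrite /coefk /=; have := modn2 k; have := divn_eq k 2.
case: (odd k) => /= h1 h2.
  have -> : k.+1 %/ 2 = (k %/ 2).+1 by lia.
  rewrite factS expnMn; lia.
have -> : k.+1 %/ 2 = k %/ 2 by lia.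
lia.
Qed.

Lemma stepP m i k (x y : X m) : 0 < m -> i + k.+1 <= m ->
  (forall z, Pchain m i k z y = coefk k * invp m i k (val z) (val y)) ->
  Pchain m i k.+1 x y = coefk k.+1 * invp m i k.+1 (val x) (val y).
Proof.
move=> m0 hik IH.
rewrite Pchain_S; under eq_bigr => z _ do rewrite IH mulnCA.
rewrite -big_distrr /= (sum_adj m x (fun S => invp m i k S (val y))) /=.
rewrite (dist_lev _ _ _ m0 hik); last by apply: leq_trans (subset_leq_card (subsetIr _ _)) _; rewrite cardXm.
rewrite (eq_bigr (fun w => nat_of_bool
    [&& #|x0 m :&: ~: val x| - (w \in x0 m) == pa1 m i k, #|x0 m :&: val y| == pa2 m i,
        #|~: val x :&: val y| - (w \in val y) == pa3 m k &
        #|x0 m :&: ~: val x :&: val y| - ((w \in x0 m) && (w \in val y)) == pa4 m i k])); last first.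
  move=> w hw; rewrite /invp MS_shift //.
set n1 := #|x0 m :&: ~: val x|; set n2 := #|x0 m :&: val y|.
set n3 := #|~: val x :&: val y|; set n4 := #|x0 m :&: ~: val x :&: val y|.
rewrite big_mkcond /=.
rewrite (eq_bigr (fun w => nat_of_bool (~~ (w \in val x)) * nat_of_bool
    [&& n1 - (w \in x0 m) == pa1 m i k, n2 == pa2 m i,
        n3 - (w \in val y) == pa3 m k &
        n4 - ((w \in x0 m) && (w \in val y)) == pa4 m i k])); last first.
  by move=> w _; rewrite in_setC; case: (w \in val x); rewrite ?mul1n ?mul0n.
rewrite (atoms _ (x0 m) (val x) (val y) (fun a b c => nat_of_bool (~~ b) * nat_of_bool
    [&& n1 - a == pa1 m i k, n2 == pa2 m i, n3 - c == pa3 m k & n4 - (a && c) == pa4 m i k])) /=.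
rewrite !mul0n !add0n !mul1n.
rewrite /invp /MS.
set AT := atom (x0 m) (val x) (val y).
have e1 : n1 = AT true false true + AT true false false.
  by rewrite /n1 /AT; cardeq m x y (fun a b c : bool => nat_of_bool (a && ~~ b)).
have e2 : n2 = AT true true true + AT true false true.
  by rewrite /n2 /AT; cardeq m x y (fun a b c : bool => nat_of_bool (a && c)).
have e3 : n3 = AT true false true + AT false false true.
  by rewrite /n3 /AT; cardeq m x y (fun a b c : bool => nat_of_bool (~~ b && c)).
have e4 : n4 = AT true false true.
  by rewrite /n4 /AT; cardeq m x y (fun a b c : bool => nat_of_bool (a && ~~ b && c)).
have e5 : #|x0 m :&: val x| = AT true true true + AT true true false.
  by rewrite /AT; cardeq m x y (fun a b c : bool => nat_of_bool (a && b)).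
have e6 : #|val x :&: val y| = AT true true true + AT false true true.
  by rewrite /AT; cardeq m x y (fun a b c : bool => nat_of_bool (b && c)).
have e7 : #|x0 m :&: val x :&: val y| = AT true true true.
  by rewrite /AT; cardeq m x y (fun a b c : bool => nat_of_bool (a && b && c)).
have e8 : m = AT true true true + AT true true false + AT true false true + AT true false false.
  by rewrite /AT -{1}(card_x0 m); cardeq m x y (fun a b c : bool => nat_of_bool a).
have e9 : m = AT true true true + AT true true false + AT false true true + AT false true false.
  by rewrite /AT -{1}(cardXm m x); cardeq m x y (fun a b c : bool => nat_of_bool b).
have e10 : m = AT true true true + AT true false true + AT false true true + AT false false true.
  by rewrite /AT -{1}(cardXm m y); cardeq m x y (fun a b c : bool => nat_of_bool c).
have e11 : 2 * m + 1 = AT true true true + AT true true false + AT true false true + AT true false false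
   + AT false true true + AT false true false + AT false false true + AT false false false.
  rewrite -[in LHS](card_ord (2 * m + 1)) -cardsT.
  by rewrite /AT; cardeq m x y (fun a b c : bool => 1).
rewrite e1 e3 e4 e5 e6 e7 -/n2 e2.
rewrite coefkS mulnCA -mulnA; congr (_ * _).
exact: (arith m i k (AT true true true) (AT true true false) (AT true false true) (AT true false false) (AT false true true) (AT false true false) (AT false false true) (AT false false false) m0 hik e8 e9 e10 e11).
Qed.


Lemma baseP m i (x y : X m) : 0 < m -> i <= m ->
  Pchain m i 0 x y = coefk 0 * invp m i 0 (val x) (val y).
Proof.
move=> m0 hi; rewrite /= /Estar /invp /MS /coefk /= mul1n.
rewrite (dist_lev _ _ _ m0 hi); last by apply: leq_trans (subset_leq_card (subsetIr _ _)) _; rewrite cardXm.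
case: (x =P y) => [<-|ne] /=.
  rewrite setIid -setIA setIid cardXm.
  move: (#|x0 m :&: val x|) => a.
  rewrite /pa1 /pa2 /pa3 /pa4 /lev /=.
  by case: (odd i) => /=; crush.
have -> : (#|val x :&: val y| == pa3 m 0) = false.
  rewrite /pa3 /= subn0; apply/negbTE/negP => /eqP hc0; apply: ne; apply: val_inj.
  have hc : #|val x :&: val y| = m := hc0.
  have h1 : val x :&: val y = val x.
    by apply/eqP; rewrite eqEcard subsetIl hc (cardXm m x) leqnn.
  have h2 : val x :&: val y = val y.
    by apply/eqP; rewrite eqEcard subsetIr hc (cardXm m y) leqnn.
  by rewrite -h1 h2.
by rewrite !andbF.
Qed.

Lemma mainP m i k : 0 < m -> i + k <= m -> forall x y : X m,
  Pchain m i k x y = coefk k * invp m i k (val x) (val y).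
Proof.
move=> m0; elim: k => [|k IHk] hik x y.
  by apply: baseP => //; lia.
apply: stepP => // z; apply: IHk; lia.
Qed.

Lemma MtpE m a b c d (x y : X m) : Mtp m a b c d x y = MS m a b c d (val x) (val y).
Proof. by []. Qed.

Theorem lemma5p1 (m i k : nat) :
  3 <= m -> i + k <= m ->
  (forall x y : X m,
     [&& ~~ odd i & odd k] ->
     Pchain m i k x y =
       ((k - 1) %/ 2)`! ^ 2 * ((k + 1) %/ 2) *
       Mtp m ((i + k - 1) %/ 2) ((2 * m - i) %/ 2)
             ((k - 1) %/ 2) ((k - 1) %/ 2) x y) /\
  (forall x y : X m,
     [&& ~~ odd i, ~~ odd k & 2 <= k] ->
     Pchain m i k x y =
       (k %/ 2)`! ^ 2 *
       Mtp m ((2 * m - i - k) %/ 2) ((2 * m - i) %/ 2)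
             ((2 * m - k) %/ 2) ((2 * m - i - k) %/ 2) x y) /\
  (forall x y : X m,
     [&& odd i & odd k] ->
     Pchain m i k x y =
       ((k - 1) %/ 2)`! ^ 2 * ((k + 1) %/ 2) *
       Mtp m ((2 * m - i - k) %/ 2) ((i - 1) %/ 2)
             ((k - 1) %/ 2) 0 x y) /\
  (forall x y : X m,
     [&& odd i, ~~ odd k & 2 <= k] ->
     Pchain m i k x y =
       (k %/ 2)`! ^ 2 *
       Mtp m ((i + k - 1) %/ 2) ((i - 1) %/ 2)
             ((2 * m - k) %/ 2) ((i - 1) %/ 2) x y).
Proof.
move=> m3 hik; have m0 : 0 < m by lia.
have hi := modn2 i; have hi2 := divn_eq i 2; have hk := modn2 k; have hk2 := divn_eq k 2.
split; [|split; [|split]] => x y.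
- case/andP => /negbTE oi ok; rewrite mainP // MtpE /coefk /invp /pa1 /pa2 /pa3 /pa4 oi ok.
  rewrite oi in hi; rewrite ok in hk.
  have -> : (k - 1) %/ 2 = k %/ 2 by lia.
  have -> : (k + 1) %/ 2 = k %/ 2 + 1 by lia.
  have -> : (i + k - 1) %/ 2 = i %/ 2 + k %/ 2 by lia.
  have -> : (2 * m - i) %/ 2 = m - i %/ 2 by lia.
  by [].
- case/and3P => /negbTE oi /negbTE ok k2; rewrite mainP // MtpE /coefk /invp /pa1 /pa2 /pa3 /pa4 oi ok muln1.
  rewrite oi in hi; rewrite ok in hk.
  have -> : (2 * m - i - k) %/ 2 = m - i %/ 2 - k %/ 2 by lia.
  have -> : (2 * m - i) %/ 2 = m - i %/ 2 by lia.
  have -> : (2 * m - k) %/ 2 = m - k %/ 2 by lia.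
  by [].
- case/andP => oi ok; rewrite mainP // MtpE /coefk /invp /pa1 /pa2 /pa3 /pa4 oi ok.
  rewrite oi in hi; rewrite ok in hk.
  have -> : (k - 1) %/ 2 = k %/ 2 by lia.
  have -> : (k + 1) %/ 2 = k %/ 2 + 1 by lia.
  have -> : (2 * m - i - k) %/ 2 = m - i %/ 2 - k %/ 2 - 1 by lia.
  have -> : (i - 1) %/ 2 = i %/ 2 by lia.
  by [].
- case/and3P => oi /negbTE ok k2; rewrite mainP // MtpE /coefk /invp /pa1 /pa2 /pa3 /pa4 oi ok muln1.
  rewrite oi in hi; rewrite ok in hk.
  have -> : (i + k - 1) %/ 2 = i %/ 2 + k %/ 2 by lia.
  have -> : (i - 1) %/ 2 = i %/ 2 by lia.
  have -> : (2 * m - k) %/ 2 = m - k %/ 2 by lia.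
  by [].
Qed.
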